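(* In the Call-by-Value probabilistic $\lambda$-calculus (as defined in the context), for every multi-distribution $\mathbf m$ and every subdistribution $\mathbf r$: if $\mathbf m\Rightarrow^{\mathrm{obs}_{\mathrm{Nnf}}}\mathbf r$ then $\mathbf m\Rightarrow_E^{\mathrm{obs}_{\mathrm{Nnf}}}\mathbf r$.
   Context: Terms $\Lambda_\oplus$: $M::=x\mid\lambda x.M\mid MM\mid M\oplus M$; values $V::=x\mid\lambda x.M$. Contexts $C::=[\,]\mid MC\mid CM\mid\lambda x.C\mid C\oplus M\mid M\oplus C$; weak contexts $W::=[\,]\mid WM\mid MW$. A multi-distribution is a finite multiset $[p_iM_i]_{i\in I}$ with $p_i\in(0,1]$, $\sum_ip_i\le1$; $+$ is multiset union, $q\cdot[p_iM_i]_i=[(qp_i)M_i]_i$, $[M]:=[1M]$. $C[(\lambda x.M)V]\to_{\beta_v}[C[M\{V/x\}]]$; $W[M\oplus N]\to_\oplus[\tfrac12W[M],\tfrac12W[N]]$; $\to:=\to_{\beta_v}\cup\to_\oplus$; surface reduction $\to_s$ is $\to_\oplus$ together with the closure of $\beta_v$ under weak contexts. $M$ is $\to$-normal (surface-normal) if no $\mathbf m$ with $M\to\mathbf m$ ($M\to_s\mathbf m$); $\mathrm{Nnf}$ is the set of $\to$-normal terms. The lifting $\Rightarrow_r$ of a relation $r$ is the least relation with $[M]\Rightarrow_r[M]$; $[M]\Rightarrow_r\mathbf m$ if $M\,r\,\mathbf m$; $[p_iM_i]_{i\in I}\Rightarrow_r\sum_ip_i\cdot\mathbf m_i$ if $[M_i]\Rightarrow_r\mathbf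 m_i$ for all $i$. $\Rightarrow$ is the lifting of $\to$. Let $\rightsquigarrow_U$ be the unbiased iteration of weak $\beta_v$-reduction on $\Lambda_\oplus$: if $M\to_wM'$ (closure of $\beta_v$ under weak contexts) then $M\rightsquigarrow_UM'$; if $M$ is $\to_w$-normal: $\lambda x.P\rightsquigarrow_U\lambda x.P'$, $PQ\rightsquigarrow_UP'Q$, $PQ\rightsquigarrow_UPQ'$, $P\oplus Q\rightsquigarrow_UP'\oplus Q$, $P\oplus Q\rightsquigarrow_UP\oplus Q'$ whenever $P\rightsquigarrow_UP'$, resp. $Q\rightsquigarrow_UQ'$. $\rightsquigarrow_E$: if $M$ is not surface-normal and $M\to_s\mathbf m$ then $M\rightsquigarrow_E\mathbf m$; if $M$ is surface-normal and $M\rightsquigarrow_UM'$ then $M\rightsquigarrow_E[M']$; $\Rightarrow_E$ is its lifting. $\mathrm{obs}_{\mathrm{Nnf}}([p_iM_i]_{i\in I})$ is the subdistribution $\mu$ on $\mathrm{Nnf}$ with $\mu(N)=\sum_{i:\,M_i=N}p_i$; subdistributions are ordered pointwise (an $\omega$-cpo with least element the zero subdistribution). For a relation $R$ on multi-distributions, $\mathbf m\,R^{\mathrm{obs}_{\mathrm{Nnf}}}\,\mathbf r$ means there is a maximal $R$-sequence $(\mathbf m_n)_n$ from $\mathbf m$ (infinite, or finite ending in an $R$-normal element and then continued constantly) with $\sup_n\mathrm{obs}_{\mathrm{Nnf}}(\mathbf m_n)=\mathbf r$. *)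

(* Defs.v *)
From Stdlib Require Import Reals Lra List Permutation Arith ClassicalDescription.
Import ListNotations.
Open Scope R_scope.

(** * Terms of Λ⊕ (de Bruijn indices, i.e. terms up to α-equivalence) *)
Inductive term : Type :=
| Var : nat -> term
| Lam : term -> term
| App : term -> term -> term
| Choice : term -> term -> term.

Definition term_eq_dec : forall x y : term, {x = y} + {x <> y}.
Proof. decide equality; apply Nat.eq_dec. Defined.

Definition value (V : term) : Prop :=
  match V with Var _ | Lam _ => True | _ => False end.

Fixpoint shift (c : nat) (t : term) : term :=
  match t with
  | Var n => if Nat.ltb n c then Var n else Var (S n)
  | Lam t => Lam (shift (S c) t)
  | App t u => App (shift c t) (shift c u)
  | Choice t u => Choice (shift c t) (shift c u)
  end.

(** capture-avoiding substitution of s for index j (removing the binder) *)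
Fixpoint subst (j : nat) (s : term) (t : term) : term :=
  match t with
  | Var n => if Nat.eqb n j then s
             else if Nat.ltb j n then Var (pred n) else Var n
  | Lam t => Lam (subst (S j) (shift 0 s) t)
  | App t u => App (subst j s t) (subst j s u)
  | Choice t u => Choice (subst j s t) (subst j s u)
  end.

(** M{V/x} for the body M of λx.M *)
Definition subst0 (V M : term) : term := subst 0 V M.

Inductive ctx : Type :=
| Hole : ctx
| CAppR : term -> ctx -> ctx
| CAppL : ctx -> term -> ctx
| CLam : ctx -> ctx
| CChL : ctx -> term -> ctx
| CChR : term -> ctx -> ctx.

Fixpoint plug (C : ctx) (t : term) : term :=
  match C with
  | Hole => t
  | CAppR M C => App M (plug C t)
  | CAppL C M => App (plug C t) M
  | CLam C => Lam (plug C t)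
  | CChL C M => Choice (plug C t) M
  | CChR M C => Choice M (plug C t)
  end.

Fixpoint weak (C : ctx) : Prop :=
  match C with
  | Hole => True
  | CAppR _ C => weak C
  | CAppL C _ => weak C
  | _ => False
  end.

(** * Multi-distributions: finite multisets [p_i M_i], represented by lists
      (considered up to permutation). *)
Definition mdist := list (R * term).

Definition mass (m : mdist) : R := fold_right (fun pM acc => fst pM + acc) 0 m.

Definition is_mdist (m : mdist) : Prop :=
  Forall (fun pM => 0 < fst pM <= 1) m /\ mass m <= 1.

Definition dirac (M : term) : mdist := [(1, M)].

Definition scale (q : R) (m : mdist) : mdist :=
  map (fun pM => (q * fst pM, snd pM)) m.

Definition beta_ctx (P : ctx -> Prop) (M M' : term) : Prop :=
  exists C B V, P C /\ value V /\
    M = plug C (App (Lam B) V) /\ M' = plug C (subst0 V B).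

Definition step_beta (M : term) (m : mdist) : Prop :=
  exists M', beta_ctx (fun _ => True) M M' /\ m = dirac M'.

Definition step_oplus (M : term) (m : mdist) : Prop :=
  exists W P Q, weak W /\ M = plug W (Choice P Q) /\
    m = [(1/2, plug W P); (1/2, plug W Q)].

Definition step (M : term) (m : mdist) : Prop := step_beta M m \/ step_oplus M m.

Definition wstep (M M' : term) : Prop := beta_ctx weak M M'.

Definition sstep (M : term) (m : mdist) : Prop :=
  step_oplus M m \/ exists M', wstep M M' /\ m = dirac M'.

Definition normal (M : term) : Prop := forall m, ~ step M m.
Definition snormal (M : term) : Prop := forall m, ~ sstep M m.
Definition wnormal (M : term) : Prop := forall M', ~ wstep M M'.

Inductive stepU : term -> term -> Prop :=
| U_w M M' : wstep M M' -> stepU M M'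
| U_lam P P' : wnormal (Lam P) -> stepU P P' -> stepU (Lam P) (Lam P')
| U_appL P Q P' : wnormal (App P Q) -> stepU P P' -> stepU (App P Q) (App P' Q)
| U_appR P Q Q' : wnormal (App P Q) -> stepU Q Q' -> stepU (App P Q) (App P Q')
| U_chL P Q P' : wnormal (Choice P Q) -> stepU P P' ->
    stepU (Choice P Q) (Choice P' Q)
| U_chR P Q Q' : wnormal (Choice P Q) -> stepU Q Q' ->
    stepU (Choice P Q) (Choice P Q').

Inductive stepE : term -> mdist -> Prop :=
| E_s M m : ~ snormal M -> sstep M m -> stepE M m
| E_u M M' : snormal M -> stepU M M' -> stepE M (dirac M').

(** * Lifting of a relation r : term -> mdist -> Prop to multi-distributions
      (least relation; result taken up to permutation = multiset equality) *)
Inductive lift (r : term -> mdist -> Prop) : mdist -> mdist -> Prop :=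
| lift_refl M : lift r (dirac M) (dirac M)
| lift_step M m : r M m -> lift r (dirac M) m
| lift_sum (l : mdist) (ms : list mdist) (n : mdist) :
    Forall2 (fun pM mi => lift r (dirac (snd pM)) mi) l ms ->
    Permutation n (concat (map (fun pm => scale (fst (fst pm)) (snd pm))
                                 (combine l ms))) ->
    lift r l n.

Definition Rsteps := lift step.
Definition RstepsE := lift stepE.

Definition weight_of (m : mdist) (N : term) : R :=
  fold_right (fun pM acc => if term_eq_dec (snd pM) N then fst pM + acc else acc)
             0 m.

Definition obs_Nnf (m : mdist) (N : term) : R :=
  if excluded_middle_informative (normal N) then weight_of m N else 0.

Definition subdist (r : term -> R) : Prop :=
  (forall N, 0 <= r N) /\ (forall N, r N <> 0 -> normal N) /\
  (forall l, NoDup l -> fold_right Rplus 0 (map r l) <= 1).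

Definition maximal_seq (Rl : mdist -> mdist -> Prop) (m : mdist)
  (s : nat -> mdist) : Prop :=
  s 0%nat = m /\
  ((forall n, Rl (s n) (s (S n))) \/
   (exists k, (forall n, (n < k)%nat -> Rl (s n) (s (S n))) /\
              (forall m', ~ Rl (s k) m') /\
              (forall n, (k <= n)%nat -> s n = s k))).

Definition obs_lim (Rl : mdist -> mdist -> Prop) (m : mdist) (r : term -> R)
  : Prop :=
  exists s, maximal_seq Rl m s /\
    forall N, is_lub (fun x => exists n, x = obs_Nnf (s n) N) (r N).

(* Main.v *)
Require Import Defs.
From Stdlib Require Import Reals Lra Lia List Permutation Arith ClassicalEpsilon ClassicalDescription.
Import ListNotations.


Open Scope R_scope.
Open Scope nat_scope.

Lemma shift_shift : forall t c c', c' <= c ->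
  shift (S c) (shift c' t) = shift c' (shift c t).
Proof.
  induction t; intros c c' H; simpl.
  - destruct (Nat.ltb_spec n c'); destruct (Nat.ltb_spec n c); simpl;
    repeat (match goal with |- context [Nat.ltb ?a ?b] => destruct (Nat.ltb_spec a b) end; simpl);
    try reflexivity; lia.
  - f_equal. apply IHt. lia.
  - f_equal; auto.
  - f_equal; auto.
Qed.

Fixpoint occ (j : nat) (t : term) : nat :=
  match t with
  | Var n => if Nat.eqb n j then 1 else 0
  | Lam t => occ (S j) t
  | App t u => occ j t + occ j u
  | Choice t u => occ j t + occ j u
  end.

Ltac ltb_cases :=
  repeat (cbn [shift subst occ] in *; match goal with
  | |- context [Nat.ltb ?a ?b] => destruct (Nat.ltb_spec a b)
  | |- context [Nat.eqb ?a ?b] => destruct (Nat.eqb_spec a b)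
  end); cbn [shift subst occ] in *; try reflexivity; try (exfalso; lia); try (f_equal; lia).

Lemma subst_shift_cancel : forall t k v, subst k v (shift k t) = t.
Proof.
  induction t; intros k v; simpl.
  - ltb_cases.
  - f_equal. apply IHt.
  - f_equal; auto.
  - f_equal; auto.
Qed.

Lemma shift_subst_a : forall t c j s, j <= c ->
  shift c (subst j s t) = subst j (shift c s) (shift (S c) t).
Proof.
  induction t; intros c j s H; simpl.
  - destruct (Nat.eqb_spec n j).
    + subst. ltb_cases.
    + ltb_cases; f_equal; lia.
  - f_equal. rewrite IHt by lia. f_equal. apply shift_shift. lia.
  - f_equal; auto.
  - f_equal; auto.
Qed.

Lemma shift_subst_b : forall t c j s, c <= j ->
  shift c (subst j s t) = subst (S j) (shift c s) (shift c t).
Proof.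
  induction t; intros c j s H; simpl.
  - destruct (Nat.eqb_spec n j).
    + subst. ltb_cases.
    + ltb_cases; f_equal; lia.
  - f_equal. rewrite IHt by lia. f_equal. symmetry. rewrite shift_shift by lia. reflexivity.
  - f_equal; auto.
  - f_equal; auto.
Qed.

Lemma subst_subst : forall t k j s v, k <= j ->
  subst j s (subst k v t) = subst k (subst j s v) (subst (S j) (shift k s) t).
Proof.
  induction t; intros k j s v H; simpl.
  - destruct (Nat.eqb_spec n k).
    + subst. ltb_cases.
    + destruct (Nat.ltb_spec k n).
      * destruct (Nat.eqb_spec n (S j)).
        -- subst. simpl. ltb_cases. rewrite subst_shift_cancel. reflexivity.
        -- ltb_cases; f_equal; lia.
      * ltb_cases.
  - f_equal. rewrite IHt by lia. f_equal.
    + rewrite shift_subst_b by lia. reflexivity.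
    + f_equal. rewrite shift_shift by lia. reflexivity.
  - f_equal; auto.
  - f_equal; auto.
Qed.


Lemma occ_shift_lt : forall t j c, j < c -> occ j (shift c t) = occ j t.
Proof.
  induction t; intros j c H; simpl; try (rewrite ?IHt1, ?IHt2 by lia; reflexivity).
  - ltb_cases.
  - apply IHt. lia.
Qed.

Lemma occ_shift_ge : forall t j c, c <= j -> occ (S j) (shift c t) = occ j t.
Proof.
  induction t; intros j c H; simpl; try (rewrite ?IHt1, ?IHt2 by lia; reflexivity).
  - ltb_cases.
  - apply IHt. lia.
Qed.

Lemma occ_subst_ge : forall t k j s, k <= j ->
  occ j (subst k s t) = occ (S j) t + occ k t * occ j s.
Proof.
  induction t; intros k j s H; simpl.
  - ltb_cases.
  - rewrite IHt by lia. rewrite occ_shift_ge by lia. reflexivity.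
  - rewrite IHt1, IHt2 by lia. lia.
  - rewrite IHt1, IHt2 by lia. lia.
Qed.

Lemma occ_subst_lt : forall t k j s, j < k ->
  occ j (subst k s t) = occ j t + occ k t * occ j s.
Proof.
  induction t; intros k j s H; simpl.
  - ltb_cases.
  - rewrite IHt by lia. rewrite occ_shift_ge by lia. reflexivity.
  - rewrite IHt1, IHt2 by lia. lia.
  - rewrite IHt1, IHt2 by lia. lia.
Qed.

Lemma occ_shift_eq : forall t c, occ c (shift c t) = 0.
Proof.
  induction t; intros c; simpl; try (rewrite ?IHt1, ?IHt2; reflexivity).
  - ltb_cases.
  - apply IHt.
Qed.


Open Scope R_scope.
Open Scope nat_scope.

Inductive parn : nat -> term -> term -> Prop :=
| pn_var x : parn 0 (Var x) (Var x)
| pn_lam n M M' : parn n M M' -> parn n (Lam M) (Lam M')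
| pn_app n k M M' N N' : parn n M M' -> parn k N N' -> parn (n + k) (App M N) (App M' N')
| pn_ch n k M M' N N' : parn n M M' -> parn k N N' -> parn (n + k) (Choice M N) (Choice M' N')
| pn_beta n k B B' V V' : parn n B B' -> parn k V V' -> value V ->
    parn (n + occ 0 B' * k + 1) (App (Lam B) V) (subst0 V' B').

Definition par M N := exists n, parn n M N.

Inductive pari : term -> term -> Prop :=
| pi_var x : pari (Var x) (Var x)
| pi_lam M M' : par M M' -> pari (Lam M) (Lam M')
| pi_app M M' N N' : pari M M' -> pari N N' -> pari (App M N) (App M' N')
| pi_ch M M' N N' : par M M' -> par N N' -> pari (Choice M N) (Choice M' N').

Lemma value_shift : forall V c, value V -> value (shift c V).
Proof. intros [] c H; simpl in *; try tauto. destruct (Nat.ltb n c); exact I. Qed.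

Lemma value_subst : forall V j s, value V -> value s -> value (subst j s V).
Proof.
  intros [] j s H Hs; simpl in *; try tauto.
  destruct (Nat.eqb n j); auto. destruct (Nat.ltb j n); exact I.
Qed.

Lemma parn_value : forall n V V', parn n V V' -> value V -> value V'.
Proof. intros n V V' H; inversion H; subst; simpl; tauto. Qed.

Lemma par_value : forall V V', par V V' -> value V -> value V'.
Proof. intros V V' [n H]; eapply parn_value; eauto. Qed.

Lemma parn_refl : forall t, exists n, parn n t t.
Proof.
  induction t.
  - eexists; constructor.
  - destruct IHt; eexists; constructor; eauto.
  - destruct IHt1, IHt2; eexists; constructor; eauto.
  - destruct IHt1, IHt2; eexists; constructor; eauto.
Qed.

Lemma par_refl : forall t, par t t.
Proof. exact parn_refl. Qed.

Lemma par_lam : forall M M', par M M' -> par (Lam M) (Lam M').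
Proof. intros M M' [n H]; eexists; constructor; eauto. Qed.
Lemma par_app : forall M M' N N', par M M' -> par N N' -> par (App M N) (App M' N').
Proof. intros M M' N N' [n H] [k K]; eexists; constructor; eauto. Qed.
Lemma par_ch : forall M M' N N', par M M' -> par N N' -> par (Choice M N) (Choice M' N').
Proof. intros M M' N N' [n H] [k K]; eexists; constructor; eauto. Qed.
Lemma par_beta : forall B B' V V', par B B' -> par V V' -> value V ->
  par (App (Lam B) V) (subst0 V' B').
Proof. intros B B' V V' [n H] [k K] HV; eexists; apply pn_beta; eauto. Qed.

Lemma parn_shift : forall n M M', parn n M M' -> forall c, parn n (shift c M) (shift c M').
Proof.
  induction 1; intros c; simpl.
  - destruct (Nat.ltb x c); constructor.
  - constructor; auto.
  - constructor; auto.
  - constructor; auto.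
  - unfold subst0. rewrite shift_subst_a by lia.
    rewrite <- (occ_shift_lt B' 0 (S c)) by lia.
    apply pn_beta; auto. apply value_shift; auto.
Qed.

Lemma parn_subst : forall n M M', parn n M M' ->
  forall j k V V', parn k V V' -> value V ->
  exists n', n' <= n + occ j M' * k /\ parn n' (subst j V M) (subst j V' M').
Proof.
  induction 1; intros j kk W W' HW HVW; simpl.
  - destruct (Nat.eqb_spec x j).
    + exists kk. split; [lia| auto].
    + exists 0. split; [lia|]. destruct (Nat.ltb j x); constructor.
  - destruct (IHparn (S j) kk (shift 0 W) (shift 0 W')) as [n' [Hle Hp]].
    + apply parn_shift; auto.
    + apply value_shift; auto.
    + exists n'. split; [lia|]. constructor; auto.
  - destruct (IHparn1 j kk W W' HW HVW) as [n1 [H1 P1]].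
    destruct (IHparn2 j kk W W' HW HVW) as [n2 [H2 P2]].
    exists (n1 + n2). split; [nia|]. constructor; auto.
  - destruct (IHparn1 j kk W W' HW HVW) as [n1 [H1 P1]].
    destruct (IHparn2 j kk W W' HW HVW) as [n2 [H2 P2]].
    exists (n1 + n2). split; [nia|]. constructor; auto.
  - destruct (IHparn1 (S j) kk (shift 0 W) (shift 0 W')) as [n1 [Hl1 P1]].
    + apply parn_shift; auto.
    + apply value_shift; auto.
    + destruct (IHparn2 j kk W W' HW HVW) as [n2 [Hl2 P2]].
      pose proof (pn_beta _ _ _ _ _ _ P1 P2 (value_subst _ _ _ H1 HVW)) as PB.
            unfold subst0 in *. rewrite <- subst_subst in PB by lia.
      eexists; split; [|exact PB].
      rewrite occ_subst_lt by lia. rewrite (occ_subst_ge B' 0 j) by lia.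
      rewrite occ_shift_eq.
      assert (occ 0 B' * n2 <= occ 0 B' * (k + occ j V' * kk)) by (apply Nat.mul_le_mono_l; lia).
      nia.
Qed.


Open Scope R_scope.
Open Scope nat_scope.

Inductive star {A} (Rl : A -> A -> Prop) : A -> A -> Prop :=
| st_refl x : star Rl x x
| st_step x y z : Rl x y -> star Rl y z -> star Rl x z.

Lemma star_trans {A} (Rl : A -> A -> Prop) : forall x y z, star Rl x y -> star Rl y z -> star Rl x z.
Proof. induction 1; intros; auto. econstructor; eauto. Qed.

Lemma star_one {A} (Rl : A -> A -> Prop) : forall x y, Rl x y -> star Rl x y.
Proof. intros; econstructor; eauto; constructor. Qed.

Lemma star_map {A B} (Rl : A -> A -> Prop) (Rl' : B -> B -> Prop) (f : A -> B) :
  (forall x y, Rl x y -> Rl' (f x) (f y)) -> forall x y, star Rl x y -> star Rl' (f x) (f y).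
Proof. intros Hf; induction 1; [constructor| econstructor; eauto]. Qed.

Inductive ws : term -> term -> Prop :=
| ws_beta B V : value V -> ws (App (Lam B) V) (subst0 V B)
| ws_l a a' b : ws a a' -> ws (App a b) (App a' b)
| ws_r a b b' : ws b b' -> ws (App a b) (App a b').

Inductive bs : term -> term -> Prop :=
| bs_beta B V : value V -> bs (App (Lam B) V) (subst0 V B)
| bs_l a a' b : bs a a' -> bs (App a b) (App a' b)
| bs_r a b b' : bs b b' -> bs (App a b) (App a b')
| bs_lam a a' : bs a a' -> bs (Lam a) (Lam a')
| bs_chl a a' b : bs a a' -> bs (Choice a b) (Choice a' b)
| bs_chr a b b' : bs b b' -> bs (Choice a b) (Choice a b').

Inductive os : term -> term -> term -> Prop :=
| os_top P Q : os (Choice P Q) P Q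
| os_l a a1 a2 b : os a a1 a2 -> os (App a b) (App a1 b) (App a2 b)
| os_r a b b1 b2 : os b b1 b2 -> os (App a b) (App a b1) (App a b2).

Lemma ws_bs : forall a b, ws a b -> bs a b.
Proof. induction 1; constructor; auto. Qed.

Lemma bs_par : forall a b, bs a b -> par a b.
Proof.
  induction 1; try (apply par_app || apply par_lam || apply par_ch); auto using par_refl.
  apply par_beta; auto using par_refl.
Qed.

Lemma pari_par : forall a b, pari a b -> par a b.
Proof.
  induction 1; try (apply par_app || apply par_lam || apply par_ch); auto using par_refl.
Qed.

Lemma pari_refl : forall t, pari t t.
Proof. induction t; constructor; auto using par_refl. Qed.

Definition isLam (t : term) : Prop := match t with Lam _ => True | _ => False end.

Lemma pari_value : forall a b, pari a b -> (value a <-> value b).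
Proof. intros a b H; inversion H; simpl; tauto. Qed.
Lemma pari_isLam : forall a b, pari a b -> (isLam a <-> isLam b).
Proof. intros a b H; inversion H; simpl; tauto. Qed.

Lemma wstar_appl : forall a a' b, star ws a a' -> star ws (App a b) (App a' b).
Proof. intros a a' b; apply (star_map ws ws (fun x => App x b)); intros; constructor; auto. Qed.
Lemma wstar_appr : forall a b b', star ws b b' -> star ws (App a b) (App a b').
Proof. intros a b b'; apply (star_map ws ws (fun x => App a x)); intros; constructor; auto. Qed.

Lemma split_parn : forall n M N, parn n M N -> exists L, star ws M L /\ pari L N.
Proof.
  intro n. induction n as [n IHo] using lt_wf_ind.
  intros M N H. induction H.
  - exists (Var x); split; constructor.
  - exists (Lam M); split; constructor. exists n; auto.
  - destruct IHparn1 as [L1 [S1 P1]]. { intros m Hm; apply IHo; lia. }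
    destruct IHparn2 as [L2 [S2 P2]]. { intros m Hm; apply IHo; lia. }
    exists (App L1 L2). split.
    + eapply star_trans. apply wstar_appl; eauto. apply wstar_appr; eauto.
    + constructor; auto.
  - exists (Choice M N). split; constructor; eexists; eauto.
  - destruct (parn_subst _ _ _ H 0 _ _ _ H0 H1) as [n' [Hle Hp]].
    destruct (IHo n' ltac:(lia) _ _ Hp) as [L [SL PL]].
    exists L. split; auto. econstructor. apply ws_beta; auto. exact SL.
Qed.

Lemma split_par : forall M N, par M N -> exists L, star ws M L /\ pari L N.
Proof. intros M N [n H]; eapply split_parn; eauto. Qed.

Lemma merge : forall t1 t2, ws t1 t2 -> forall t, pari t t1 -> exists t', ws t t' /\ par t' t2.
Proof.
  induction 1; intros t Hp.
  - inversion Hp as [| |M0 M1 N0 N1 HM HN|]; subst. inversion HM as [|B0 B1 HB0| |]; subst.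
    destruct HB0 as [k HB].
    assert (value N0) by (apply (proj2 (pari_value _ _ HN)); auto).
    destruct (pari_par _ _ HN) as [kv HV].
    destruct (parn_subst _ _ _ HB 0 _ _ _ HV H0) as [n' [_ Hs]].
    eexists; split. apply ws_beta; auto. exists n'. exact Hs.
  - inversion Hp; subst. destruct (IHws _ H3) as [x [Hx Px]].
    eexists; split. apply ws_l; eauto. apply par_app; auto. apply pari_par; auto.
  - inversion Hp; subst. destruct (IHws _ H4) as [x [Hx Px]].
    eexists; split. apply ws_r; eauto. apply par_app; auto. apply pari_par; auto.
Qed.

Lemma sw1 : forall t t1 t2, pari t t1 -> ws t1 t2 ->
  exists t' t'', ws t t' /\ star ws t' t'' /\ pari t'' t2.
Proof.
  intros t t1 t2 P W. destruct (merge _ _ W _ P) as [x [Hx Px]].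
  destruct (split_par _ _ Px) as [L [SL PL]]. exists x, L; auto.
Qed.

Lemma pp : forall b c, star ws b c -> forall a, pari a b -> exists a', star ws a a' /\ pari a' c.
Proof.
  induction 1; intros a P.
  - exists a; split; auto. constructor.
  - destruct (sw1 _ _ _ P H) as [t' [t'' [W [S P']]]].
    destruct (IHstar _ P') as [a' [Sa Pa]].
    exists a'; split; auto. econstructor; eauto. eapply star_trans; eauto.
Qed.

Lemma os_pari : forall u a1 b1, os u a1 b1 -> forall t, pari t u ->
  exists a b, os t a b /\ par a a1 /\ par b b1.
Proof.
  induction 1; intros t Hp.
  - inversion Hp; subst. exists M, N; repeat split; auto. constructor.
  - inversion Hp; subst. destruct (IHos _ H3) as [x [y [O [Px Py]]]].
    exists (App x N), (App y N). repeat split.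
    + constructor; auto.
    + apply par_app; auto. apply pari_par; auto.
    + apply par_app; auto. apply pari_par; auto.
  - inversion Hp; subst. destruct (IHos _ H4) as [x [y [O [Px Py]]]].
    exists (App M x), (App M y). repeat split.
    + constructor; auto.
    + apply par_app; auto. apply pari_par; auto.
    + apply par_app; auto. apply pari_par; auto.
Qed.

Lemma bs_class : forall u u', bs u u' -> ws u u' \/ pari u u'.
Proof.
  induction 1.
  - left; constructor; auto.
  - destruct IHbs; [left; constructor; auto| right; constructor; auto using pari_refl].
  - destruct IHbs; [left; constructor; auto| right; constructor; auto using pari_refl].
  - right; constructor; apply bs_par; auto.
  - right; constructor; auto using par_refl, bs_par.
  - right; constructor; auto using par_refl, bs_par.
Qed.

Fixpoint wn (t : term) : Prop :=
  match t with
  | App a b => wn a /\ wn b /\ ~ (isLam a /\ value b)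
  | _ => True
  end.

Fixpoint sn (t : term) : Prop :=
  match t with
  | App a b => sn a /\ sn b /\ ~ (isLam a /\ value b)
  | Choice _ _ => False
  | _ => True
  end.

Lemma wn_iff : forall t, wn t <-> (forall t', ~ ws t t').
Proof.
  induction t; simpl; split; intros H.
  - intros t' W; inversion W.
  - auto.
  - intros t' W; inversion W.
  - auto.
  - destruct H as [H1 [H2 H3]]. intros t' W. inversion W; subst.
    + apply H3; simpl; auto.
    + eapply IHt1; eauto.
    + eapply IHt2; eauto.
  - repeat split.
    + apply IHt1. intros t' W. eapply H. apply ws_l; eauto.
    + apply IHt2. intros t' W. eapply H. apply ws_r; eauto.
    + intros [HL HV]. destruct t1; simpl in HL; try tauto. eapply H. apply ws_beta; auto.
  - intros t' W; inversion W.
  - auto.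
Qed.

Lemma sn_iff : forall t, sn t <-> ((forall t', ~ ws t t') /\ (forall a b, ~ os t a b)).
Proof.
  induction t; simpl; split; intros H.
  - split; intros; intro W; inversion W.
  - auto.
  - split; intros; intro W; inversion W.
  - auto.
  - destruct H as [H1 [H2 H3]]. apply IHt1 in H1. apply IHt2 in H2. split.
    + intros t' W. inversion W; subst.
      * apply H3; simpl; auto.
      * eapply (proj1 H1); eauto.
      * eapply (proj1 H2); eauto.
    + intros a b O. inversion O; subst.
      * eapply (proj2 H1); eauto.
      * eapply (proj2 H2); eauto.
  - destruct H as [HW HO]. repeat split.
    + apply IHt1. split.
      * intros t' W. eapply HW. apply ws_l; eauto.
      * intros a b O. eapply HO. apply os_l; eauto.
    + apply IHt2. split.
      * intros t' W. eapply HW. apply ws_r; eauto.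
      * intros a b O. eapply HO. apply os_r; eauto.
    + intros [HL HV]. destruct t1; simpl in HL; try tauto. eapply HW. apply ws_beta; auto.
  - contradiction.
  - destruct H as [_ HO]. eapply HO. constructor.
Qed.

Lemma pari_wn : forall a b, pari a b -> (wn a <-> wn b).
Proof.
  induction 1; simpl; try tauto.
  rewrite IHpari1, IHpari2, (pari_isLam _ _ H), (pari_value _ _ H0). tauto.
Qed.

Lemma pari_sn : forall a b, pari a b -> (sn a <-> sn b).
Proof.
  induction 1; simpl; try tauto.
  rewrite IHpari1, IHpari2, (pari_isLam _ _ H), (pari_value _ _ H0). tauto.
Qed.

Lemma sn_wn : forall t, sn t -> wn t.
Proof. induction t; simpl; tauto. Qed.

Fixpoint bnormal (t : term) : Prop :=
  match t with
  | Var _ => True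
  | Lam a => bnormal a
  | App a b => bnormal a /\ bnormal b /\ ~ (isLam a /\ value b)
  | Choice a b => bnormal a /\ bnormal b
  end.

Lemma bnormal_or_bs : forall t, bnormal t \/ exists t', bs t t'.
Proof.
  induction t; simpl.
  - auto.
  - destruct IHt as [H|[t' H]]; auto. right; eexists; constructor; eauto.
  - destruct IHt1 as [H1|[t' H1]]; [|right; eexists; apply bs_l; eauto].
    destruct IHt2 as [H2|[t' H2]]; [|right; eexists; apply bs_r; eauto].
    destruct t1; simpl; try tauto.
    destruct t2; simpl; try tauto.
    + right; eexists; apply bs_beta; simpl; auto.
    + right; eexists; apply bs_beta; simpl; auto.
  - destruct IHt1 as [H1|[t' H1]]; [|right; eexists; apply bs_chl; eauto].
    destruct IHt2 as [H2|[t' H2]]; [|right; eexists; apply bs_chr; eauto]. auto.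
Qed.

Lemma bnormal_wn : forall t, bnormal t -> wn t.
Proof. induction t; simpl; tauto. Qed.

Lemma parn_bnormal : forall n a b, parn n a b -> bnormal a -> b = a.
Proof.
  induction 1; simpl; intros Hb; try reflexivity.
  - f_equal; auto.
  - f_equal; tauto.
  - f_equal; tauto.
  - exfalso. destruct Hb as [_ [_ Hb]]. apply Hb; simpl; auto.
Qed.

Lemma par_bnormal : forall a b, par a b -> bnormal a -> b = a.
Proof. intros a b [n H]; eapply parn_bnormal; eauto. Qed.

Lemma pari_star_bnormal : forall a b, star pari a b -> bnormal a -> b = a.
Proof.
  induction 1; intros; auto.
  assert (y = x) by (apply par_bnormal; auto; apply pari_par; auto). subst. auto.
Qed.


Open Scope R_scope.

Lemma wstep_ws : forall t t', wstep t t' <-> ws t t'.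
Proof.
  intros t t'; split.
  - intros [C [B [V [HW [HV [E1 E2]]]]]]; subst.
    induction C; simpl in *; try contradiction.
    + constructor; auto.
    + apply ws_r; auto.
    + apply ws_l; auto.
  - induction 1.
    + exists Hole, B, V; simpl; auto.
    + destruct IHws as [C [B [V [HW [HV [E1 E2]]]]]]; subst.
      exists (CAppL C b), B, V; simpl; auto.
    + destruct IHws as [C [B [V [HW [HV [E1 E2]]]]]]; subst.
      exists (CAppR a C), B, V; simpl; auto.
Qed.

Lemma beta_bs : forall t t', beta_ctx (fun _ => True) t t' <-> bs t t'.
Proof.
  intros t t'; split.
  - intros [C [B [V [HW [HV [E1 E2]]]]]]; subst.
    induction C; simpl in *; constructor; auto.
  - induction 1;
    try (destruct IHbs as [C [B0 [V0 [HW [HV [E1 E2]]]]]]; subst).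
    + exists Hole, B, V; simpl; auto.
    + exists (CAppL C b), B0, V0; simpl; auto.
    + exists (CAppR a C), B0, V0; simpl; auto.
    + exists (CLam C), B0, V0; simpl; auto.
    + exists (CChL C b), B0, V0; simpl; auto.
    + exists (CChR a C), B0, V0; simpl; auto.
Qed.

Lemma oplus_os : forall t n, step_oplus t n <->
  exists a b, os t a b /\ n = [((1/2)%R, a); ((1/2)%R, b)].
Proof.
  intros t n; split.
  - intros [W [P [Q [HW [E1 E2]]]]]; subst. exists (plug W P), (plug W Q); split; auto.
    induction W; simpl in *; try contradiction; constructor; auto.
  - intros [a [b [O E]]]; subst. induction O.
    + exists Hole, P, Q; simpl; auto.
    + destruct IHO as [W [P [Q [HW [E1 E2]]]]]. injection E2; intros; subst.
      exists (CAppL W b), P, Q; simpl; repeat split; auto; rewrite E1; auto.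
    + destruct IHO as [W [P [Q [HW [E1 E2]]]]]. injection E2; intros; subst.
      exists (CAppR a W), P, Q; simpl; repeat split; auto; rewrite E1; auto.
Qed.

Lemma wnormal_wn : forall t, wnormal t <-> wn t.
Proof.
  intros t. rewrite wn_iff. unfold wnormal. split; intros H t' W; apply (H t'); apply wstep_ws; auto.
Qed.

Lemma sstep_iff : forall t n, sstep t n <->
  (exists a b, os t a b /\ n = [((1/2)%R, a); ((1/2)%R, b)]) \/ (exists t', ws t t' /\ n = dirac t').
Proof.
  intros t n; unfold sstep. rewrite oplus_os. split; intros [H|[t' [H1 H2]]]; auto;
  right; exists t'; split; auto; apply wstep_ws; auto.
Qed.

Lemma snormal_sn : forall t, snormal t <-> sn t.
Proof.
  intros t. rewrite sn_iff. unfold snormal. split.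
  - intros H. split.
    + intros t' W. apply (H (dirac t')). apply sstep_iff. right; eauto.
    + intros a b O. apply (H [((1/2)%R, a); ((1/2)%R, b)]). apply sstep_iff. left; eauto.
  - intros [H1 H2] m S. apply sstep_iff in S. destruct S as [[a [b [O _]]]|[t' [W _]]].
    + eapply H2; eauto.
    + eapply H1; eauto.
Qed.

Lemma step_beta_iff : forall t m, step_beta t m <-> exists t', bs t t' /\ m = dirac t'.
Proof.
  intros t m; unfold step_beta. split; intros [t' [H1 H2]]; exists t'; split; auto; apply beta_bs; auto.
Qed.

Lemma normal_bnormal : forall N, normal N -> bnormal N.
Proof.
  intros N H. destruct (bnormal_or_bs N) as [B|[t' Hb]]; auto.
  exfalso. apply (H (dirac t')). left. apply step_beta_iff. eauto.
Qed.

Lemma normal_sn : forall N, normal N -> sn N.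
Proof.
  intros N H. apply snormal_sn. intros m S. apply (H m).
  apply sstep_iff in S. destruct S as [[a [b [O E]]]|[t' [W E]]].
  - right. apply oplus_os. eauto.
  - left. apply step_beta_iff. exists t'; split; auto. apply ws_bs; auto.
Qed.

Lemma stepU_bs : forall t t', stepU t t' -> bs t t'.
Proof.
  induction 1; try (constructor; auto; fail).
  apply ws_bs, wstep_ws; auto.
Qed.

Lemma stepU_pari : forall t t', stepU t t' -> wn t -> pari t t'.
Proof.
  induction 1; intros Hw.
  - exfalso. pose proof (proj1 (wn_iff _) Hw) as Hw'. apply (Hw' M'). apply wstep_ws; auto.
  - constructor. apply bs_par, stepU_bs; auto.
  - simpl in Hw. constructor; [apply IHstepU; tauto| apply pari_refl].
  - simpl in Hw. constructor; [apply pari_refl | apply IHstepU; tauto].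
  - constructor; [apply bs_par, stepU_bs; auto| apply par_refl].
  - constructor; [apply par_refl| apply bs_par, stepU_bs; auto].
Qed.


Open Scope R_scope.

Lemma fact : forall t N, star par t N -> exists L, star ws t L /\ star pari L N.
Proof.
  induction 1.
  - exists x; split; constructor.
  - destruct IHstar as [L1 [S1 P1]].
    destruct (split_par _ _ H) as [L0 [S0 P0]].
    destruct (pp _ _ S1 _ P0) as [L0' [S0' P0']].
    exists L0'; split.
    + eapply star_trans; eauto.
    + econstructor; eauto.
Qed.

Lemma star_pari_par : forall a b, star pari a b -> star par a b.
Proof. induction 1; econstructor; eauto. apply pari_par; auto. Qed.

Lemma star_pari_wn : forall a b, star pari a b -> wn b -> wn a.
Proof. induction 1; auto. intros. apply (pari_wn _ _ H). auto. Qed.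

Lemma star_pari_wn_fwd : forall a b, star pari a b -> wn a -> wn b.
Proof. induction 1; auto. intros. apply IHstar. apply (pari_wn _ _ H). auto. Qed.

Lemma star_pari_sn : forall a b, star pari a b -> sn b -> sn a.
Proof. induction 1; auto. intros. apply (pari_sn _ _ H). auto. Qed.

Lemma star_pari_var : forall L X, star pari L X -> forall x, X = Var x -> L = Var x.
Proof.
  induction 1; intros; subst; auto. rewrite (IHstar x0 eq_refl) in H. inversion H; auto.
Qed.

Lemma star_pari_lam : forall L X, star pari L X -> forall N, X = Lam N ->
  exists Q, L = Lam Q /\ star par Q N.
Proof.
  induction 1; intros; subst.
  - eexists; split; eauto. constructor.
  - destruct (IHstar _ eq_refl) as [Q [E S]]; subst. inversion H; subst.
    eexists; split; eauto. econstructor; eauto.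
Qed.

Lemma star_pari_app : forall L X, star pari L X -> forall N1 N2, X = App N1 N2 ->
  exists A B, L = App A B /\ star pari A N1 /\ star pari B N2.
Proof.
  induction 1; intros; subst.
  - do 2 eexists; split; eauto. split; constructor.
  - destruct (IHstar _ _ eq_refl) as [A [B [E [S1 S2]]]]; subst. inversion H; subst.
    do 2 eexists; split; eauto. split; econstructor; eauto.
Qed.

Lemma star_pari_ch : forall L X, star pari L X -> forall N1 N2, X = Choice N1 N2 ->
  exists A B, L = Choice A B /\ star par A N1 /\ star par B N2.
Proof.
  induction 1; intros; subst.
  - do 2 eexists; split; eauto. split; constructor.
  - destruct (IHstar _ _ eq_refl) as [A [B [E [S1 S2]]]]; subst. inversion H; subst.
    do 2 eexists; split; eauto. split; econstructor; eauto.
Qed.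

Lemma U_lam_star : forall Q Q', star stepU Q Q' -> star stepU (Lam Q) (Lam Q').
Proof.
  apply (star_map stepU stepU Lam). intros. apply U_lam; auto. apply wnormal_wn; simpl; auto.
Qed.

Lemma U_chl_star : forall P P' Q, star stepU P P' -> star stepU (Choice P Q) (Choice P' Q).
Proof.
  intros P P' Q. apply (star_map stepU stepU (fun x => Choice x Q)). intros.
  apply U_chL; auto. apply wnormal_wn; simpl; auto.
Qed.

Lemma U_chr_star : forall P Q Q', star stepU Q Q' -> star stepU (Choice P Q) (Choice P Q').
Proof.
  intros P Q Q'. apply (star_map stepU stepU (fun x => Choice P x)). intros.
  apply U_chR; auto. apply wnormal_wn; simpl; auto.
Qed.

Lemma U_appl_star : forall A A', star stepU A A' -> forall B, wn (App A B) ->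
  star stepU (App A B) (App A' B).
Proof.
  induction 1; intros B Hw.
  - constructor.
  - econstructor. apply U_appL; eauto. apply wnormal_wn; auto.
    apply IHstar. apply (pari_wn (App x B) (App y B)); auto.
    constructor; [apply stepU_pari; auto; simpl in Hw; tauto| apply pari_refl].
Qed.

Lemma U_appr_star : forall B B', star stepU B B' -> forall A, wn (App A B) ->
  star stepU (App A B) (App A B').
Proof.
  induction 1; intros A Hw.
  - constructor.
  - econstructor. apply U_appR; eauto. apply wnormal_wn; auto.
    apply IHstar. apply (pari_wn (App A x) (App A y)); auto.
    constructor; [apply pari_refl| apply stepU_pari; auto; simpl in Hw; tauto].
Qed.

Lemma star_pari_appl : forall A A' B, star pari A A' -> star pari (App A B) (App A' B).
Proof.
  intros A A' B. apply (star_map pari pari (fun x => App x B)). intros; constructor; auto using pari_refl.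
Qed.

Lemma UN : forall N, bnormal N -> forall t, star par t N -> star stepU t N.
Proof.
  induction N; intros Hb t Hp; destruct (fact _ _ Hp) as [L [SW SP]];
  (apply star_trans with L; [apply (star_map ws stepU (fun x => x)); auto;
     intros; apply U_w; apply wstep_ws; auto |]).
  - rewrite (star_pari_var _ _ SP n eq_refl). constructor.
  - destruct (star_pari_lam _ _ SP _ eq_refl) as [Q [E S]]; subst.
    apply U_lam_star. apply IHN; auto.
  - simpl in Hb. destruct (star_pari_app _ _ SP _ _ eq_refl) as [A [B [E [S1 S2]]]]; subst.
    assert (HwL : wn (App A B)).
    { apply (star_pari_wn _ _ SP). apply bnormal_wn. simpl; auto. }
    apply star_trans with (App N1 B).
    + apply U_appl_star; auto. apply IHN1; try tauto. apply star_pari_par; auto.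
    + apply U_appr_star.
      * apply IHN2; try tauto. apply star_pari_par; auto.
      * apply (star_pari_wn_fwd _ _ (star_pari_appl _ _ B S1) HwL).
  - simpl in Hb. destruct (star_pari_ch _ _ SP _ _ eq_refl) as [A [B [E [S1 S2]]]]; subst.
    apply star_trans with (Choice N1 B).
    + apply U_chl_star. apply IHN1; tauto.
    + apply U_chr_star. apply IHN2; tauto.
Qed.

Lemma UN_sn : forall t N, star stepU t N -> sn t ->
  star (fun a b => sn a /\ stepU a b) t N.
Proof.
  induction 1; intros Hs; [constructor|].
  econstructor. split; eauto. apply IHstar.
  apply (pari_sn _ _ (stepU_pari _ _ H (sn_wn _ Hs))); auto.
Qed.

Lemma UN_final : forall t N, star pari t N -> normal N ->
  sn t /\ star (fun a b => sn a /\ stepU a b) t N.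
Proof.
  intros t N S HN.
  assert (sn t) by (apply (star_pari_sn _ _ S); apply normal_sn; auto).
  split; auto. apply UN_sn; auto. apply UN. apply normal_bnormal; auto.
  apply star_pari_par; auto.
Qed.


Open Scope R_scope.

Definition basic (r : term -> mdist -> Prop) (M : term) (mi : mdist) : Prop :=
  mi = dirac M \/ r M mi.

Definition comb (l : mdist) (ms : list mdist) : mdist :=
  concat (map (fun pm => scale (fst (fst pm)) (snd pm)) (combine l ms)).

Definition LC (r : term -> mdist -> Prop) (l n : mdist) : Prop :=
  exists ms, Forall2 (fun pM mi => basic r (snd pM) mi) l ms /\ Permutation n (comb l ms).

Section LiftInd.
Variable r : term -> mdist -> Prop.
Variable P : mdist -> mdist -> Prop.
Hypothesis Hrefl : forall M, P (dirac M) (dirac M).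
Hypothesis Hstep : forall M m, r M m -> P (dirac M) m.
Hypothesis Hsum : forall l ms n,
  Forall2 (fun pM mi => lift r (dirac (snd pM)) mi /\ P (dirac (snd pM)) mi) l ms ->
  Permutation n (concat (map (fun pm => scale (fst (fst pm)) (snd pm)) (combine l ms))) ->
  P l n.

Fixpoint lift_ind2 (l n : mdist) (H : lift r l n) {struct H} : P l n :=
  match H in lift _ l n return P l n with
  | lift_refl _ M => Hrefl M
  | lift_step _ M m Hr => Hstep M m Hr
  | lift_sum _ l ms n HF HP =>
      Hsum l ms n
        ((fix F (l : mdist) (ms : list mdist)
              (HF : Forall2 (fun pM mi => lift r (dirac (snd pM)) mi) l ms) :
              Forall2 (fun pM mi => lift r (dirac (snd pM)) mi /\ P (dirac (snd pM)) mi) l ms :=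
            match HF in Forall2 _ l ms return
              Forall2 (fun pM mi => lift r (dirac (snd pM)) mi /\ P (dirac (snd pM)) mi) l ms with
            | Forall2_nil _ => Forall2_nil _
            | @Forall2_cons _ _ _ x y l' ms' Hxy Hrest =>
                @Forall2_cons _ _ _ x y l' ms' (conj Hxy (lift_ind2 _ _ Hxy)) (F _ _ Hrest)
            end) l ms HF) HP
  end.
End LiftInd.

Lemma scale_1 : forall m, scale 1 m = m.
Proof. induction m as [|[p M] m IH]; simpl; auto. rewrite IH, Rmult_1_l. auto. Qed.

Lemma scale_dirac : forall p M, scale p (dirac M) = [(p, M)].
Proof. intros; unfold scale, dirac; simpl. rewrite Rmult_1_r. auto. Qed.

Lemma scale_app : forall p a b, scale p (a ++ b) = scale p a ++ scale p b.
Proof. intros; unfold scale; apply map_app. Qed.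

Lemma scale_scale : forall p q m, scale p (scale q m) = scale (p * q) m.
Proof. induction m as [|[x M] m IH]; simpl; auto. rewrite IH, Rmult_assoc. auto. Qed.

Lemma comb_cons : forall x l m ms, comb (x :: l) (m :: ms) = scale (fst x) m ++ comb l ms.
Proof. reflexivity. Qed.

Lemma comb_nil : comb [] [] = [].
Proof. reflexivity. Qed.

Lemma comb_perm : forall ms ms',
  Forall2 (@Permutation _) ms ms' -> forall (l' : mdist), length l' = length ms -> 
  Permutation (comb l' ms) (comb l' ms').
Proof.
  intros ms ms' HF. induction HF as [|x y l0 l0' Hxy HF IH]; intros l1 Hl; destruct l1; simpl in *; try discriminate.
  - apply Permutation_refl.
  - rewrite !comb_cons. apply Permutation_app; auto. unfold scale; apply Permutation_map; auto.
Qed.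

Lemma Forall2_length' : forall {A B} (R : A -> B -> Prop) l l', Forall2 R l l' -> length l = length l'.
Proof. induction 1; simpl; auto. Qed.

Lemma lift_LC : forall r l n, lift r l n -> LC r l n.
Proof.
  intros r. apply lift_ind2.
  - intros M. exists [dirac M]. split.
    + constructor; [left; auto| constructor].
    + unfold comb; simpl. rewrite Rmult_1_r. apply Permutation_refl.
  - intros M m H. exists [m]. split.
    + constructor; [right; auto| constructor].
    + unfold comb; simpl. rewrite scale_1, app_nil_r. apply Permutation_refl.
  - intros l ms n HF HP.
    assert (exists ms', Forall2 (fun pM mi => basic r (snd pM) mi) l ms' /\
                        Forall2 (@Permutation _) ms ms') as [ms' [H1 H2]].
    { clear HP. induction HF as [|x y l' ms0 [_ [ms1 [Hb Hp]]] Hr IH].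
      - exists []; split; constructor.
      - destruct IH as [ms' [H1 H2]].
        inversion Hb as [|x1 y1 l1 l1' Hb1 Hb2]; subst. inversion Hb2; subst.
        exists (y1 :: ms'). split; constructor; auto.
        unfold comb in Hp; simpl in Hp. rewrite scale_1, app_nil_r in Hp. auto. }
    exists ms'. split; auto.
    eapply Permutation_trans; [exact HP|].
    apply comb_perm; auto.
    apply Forall2_length' in HF; auto.
Qed.

Lemma LC_lift : forall r l n, LC r l n -> lift r l n.
Proof.
  intros r l n [ms [HF HP]]. apply lift_sum with ms; auto.
  clear HP. induction HF; constructor; auto.
  destruct H as [E|H]; [subst; apply lift_refl| apply lift_step; auto].
Qed.

Lemma LC_refl_ms : forall (r : term -> mdist -> Prop) l,
  Forall2 (fun pM mi => basic r (snd pM) mi) l (map (fun pM => dirac (snd pM)) l) /\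
  comb l (map (fun pM => dirac (snd pM)) l) = l.
Proof.
  intros r l. induction l as [|[p M] l [IH1 IH2]]; simpl.
  - split; constructor.
  - split.
    + constructor; auto. left; auto.
    + rewrite comb_cons, IH2. simpl. rewrite Rmult_1_r. auto.
Qed.

Lemma lift_perm : forall r a b, Permutation a b -> lift r a b.
Proof.
  intros r a b P. apply LC_lift. exists (map (fun pM => dirac (snd pM)) a).
  destruct (LC_refl_ms r a) as [H1 H2]. split; auto. rewrite H2. apply Permutation_sym; auto.
Qed.

Lemma lift_self : forall r a, lift r a a.
Proof. intros; apply lift_perm; apply Permutation_refl. Qed.

Lemma comb_app : forall l1 ms1 l2 ms2, length l1 = length ms1 ->
  comb (l1 ++ l2) (ms1 ++ ms2) = comb l1 ms1 ++ comb l2 ms2.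
Proof.
  induction l1; intros ms1 l2 ms2 H; destruct ms1; simpl in *; try discriminate; auto.
  rewrite !comb_cons, IHl1 by lia. rewrite app_assoc. auto.
Qed.

Lemma comb_scale : forall p l ms, comb (scale p l) ms = scale p (comb l ms).
Proof.
  induction l; intros ms; destruct ms; try reflexivity.
  change (scale p (a :: l)) with ((p * fst a, snd a) :: scale p l).
    rewrite !comb_cons, IHl, scale_app, scale_scale. auto.
Qed.

Lemma LC_app : forall r a a' b b', LC r a a' -> LC r b b' -> LC r (a ++ b) (a' ++ b').
Proof.
  intros r a a' b b' [ms1 [H1 P1]] [ms2 [H2 P2]]. exists (ms1 ++ ms2). split.
  - apply Forall2_app; auto.
  - rewrite comb_app by (eapply Forall2_length'; eauto). apply Permutation_app; auto.
Qed.

Lemma LC_scale : forall r p a a', LC r a a' -> LC r (scale p a) (scale p a').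
Proof.
  intros r p a a' [ms [H1 P1]]. exists ms. split.
  - clear P1. induction H1; simpl; constructor; auto.
  - rewrite comb_scale. unfold scale; apply Permutation_map; auto.
Qed.

Lemma lift_app : forall r a a' b b', lift r a a' -> lift r b b' -> lift r (a ++ b) (a' ++ b').
Proof. intros. apply LC_lift, LC_app; apply lift_LC; auto. Qed.

Lemma lift_scale : forall r p a a', lift r a a' -> lift r (scale p a) (scale p a').
Proof. intros. apply LC_lift, LC_scale; apply lift_LC; auto. Qed.

Lemma lift_mono : forall (r r' : term -> mdist -> Prop), (forall M m, r M m -> r' M m) ->
  forall a b, lift r a b -> lift r' a b.
Proof.
  intros r r' Hr a b H. apply lift_LC in H. destruct H as [ms [H1 H2]].
  apply LC_lift. exists ms. split; auto. clear H2. induction H1; constructor; auto.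
  destruct H as [E|E]; [left|right]; auto.
Qed.

Lemma starL_app : forall r a a' b b', star (lift r) a a' -> star (lift r) b b' ->
  star (lift r) (a ++ b) (a' ++ b').
Proof.
  intros r a a' b b' Ha Hb. apply star_trans with (a' ++ b).
  - clear Hb. induction Ha; [constructor|]. econstructor; [|eauto]. apply lift_app; auto. apply lift_self.
  - induction Hb; [constructor|]. econstructor; [|eauto]. apply lift_app; auto. apply lift_self.
Qed.

Lemma starL_scale : forall r p a a', star (lift r) a a' -> star (lift r) (scale p a) (scale p a').
Proof. intros r p a a' H; induction H; [constructor| econstructor; eauto; apply lift_scale; auto]. Qed.

Lemma starL_comb : forall r l gs,
  Forall2 (fun pM g => star (lift r) (dirac (snd pM)) g) l gs -> star (lift r) l (comb l gs).
Proof.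
  intros r l gs H. induction H; [constructor|].
  rewrite comb_cons. change (x :: l) with ([x] ++ l). apply starL_app; auto.
  destruct x as [p M]. rewrite <- scale_dirac. apply starL_scale; auto.
Qed.

Lemma starL_mono : forall (r r' : term -> mdist -> Prop), (forall M m, r M m -> r' M m) ->
  forall a b, star (lift r) a b -> star (lift r') a b.
Proof. intros r r' Hr a b H; induction H; [constructor| econstructor; eauto; eapply lift_mono; eauto]. Qed.

Definition Fw (Rt : term -> term -> Prop) (f s : mdist) : Prop :=
  Forall2 (fun a b => fst a = fst b /\ Rt (snd a) (snd b)) f s.

Lemma Fw_app : forall Rt a b c d, Fw Rt a b -> Fw Rt c d -> Fw Rt (a ++ c) (b ++ d).
Proof. intros; apply Forall2_app; auto. Qed.

Lemma Fw_scale : forall Rt p a b, Fw Rt a b -> Fw Rt (scale p a) (scale p b).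
Proof. intros Rt p a b H; induction H; simpl; constructor; auto. simpl. destruct H; split; auto. rewrite H; auto. Qed.

Lemma Fw_mono : forall (R1 R2 : term -> term -> Prop), (forall x y, R1 x y -> R2 x y) ->
  forall a b, Fw R1 a b -> Fw R2 a b.
Proof. intros R1 R2 H a b F; induction F; constructor; auto. destruct H0; split; auto. Qed.

Lemma Fw_dirac : forall (Rt : term -> term -> Prop) t u, Rt t u -> Fw Rt (dirac t) (dirac u).
Proof. intros; constructor; [split; auto| constructor]. Qed.

Lemma Fw_refl : forall (Rt : term -> term -> Prop), (forall x, Rt x x) -> forall a, Fw Rt a a.
Proof. intros Rt H a; induction a; constructor; auto. Qed.

Lemma Fw_comp : forall (R1 R2 R3 : term -> term -> Prop), (forall x y z, R1 x y -> R2 y z -> R3 x z) ->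
  forall a b c, Fw R1 a b -> Fw R2 b c -> Fw R3 a c.
Proof.
  intros R1 R2 R3 H a b c F1. revert c. induction F1; intros c F2; inversion F2; subst; constructor.
  - destruct H0, H3. split; [congruence| eauto].
  - apply IHF1. exact H5.
Qed.

Lemma comb_step : forall (R R' : term -> term -> Prop) (rr rE : term -> mdist -> Prop) f s s',
  Fw R f s -> lift rr s s' ->
  (forall t u n, R t u -> basic rr u n -> exists g, star (lift rE) (dirac t) g /\ Fw R' g n) ->
  exists f', star (lift rE) f f' /\ Fw R' f' s'.
Proof.
  intros R R' rr rE f s s' HF HL HE.
  apply lift_LC in HL. destruct HL as [ms [Hb HP]].
  assert (exists gs, Forall2 (fun pM g => star (lift rE) (dirac (snd pM)) g) f gs /\
                     Fw R' (comb f gs) (comb s ms)) as [gs [G1 G2]].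
  { clear HP. revert ms Hb. induction HF as [|a b f s [Hab HR] HF IH]; intros ms Hb.
    - inversion Hb; subst. exists []; split; constructor.
    - inversion Hb as [|x y l l' Hxy Hr]; subst.
      destruct (IH _ Hr) as [gs [G1 G2]].
      destruct (HE _ _ _ HR Hxy) as [g [Sg Fg]].
      exists (g :: gs). split; [constructor; auto|].
      rewrite !comb_cons. rewrite Hab. apply Fw_app; auto. apply Fw_scale; auto. }
  apply Permutation_sym in HP.
  destruct (Permutation_Forall2 HP (Forall2_flip G2)) as [f' [Pf Ff]].
  exists f'. split.
  - eapply star_trans. apply starL_comb; eauto. apply star_one. apply lift_perm; auto.
  - apply Forall2_flip in Ff. exact Ff.
Qed.

Lemma comb_nostep : forall (R R' : term -> term -> Prop) (rE : term -> mdist -> Prop) f s,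
  Fw R f s ->
  (forall t u, R t u -> exists t', star (lift rE) (dirac t) (dirac t') /\ R' t' u) ->
  exists f', star (lift rE) f f' /\ Fw R' f' s.
Proof.
  intros R R' rE f s HF HE.
  apply (comb_step R R' (fun _ _ => False) rE f s s HF (lift_self _ _)).
  intros t u n HR [E|[]]; subst. destruct (HE _ _ HR) as [t' [S1 S2]].
  exists (dirac t'); split; auto. apply Fw_dirac; auto.
Qed.


Open Scope R_scope.

Lemma ws_star_lift : forall x y, star ws x y -> star (lift sstep) (dirac x) (dirac y).
Proof.
  induction 1; [constructor|]. econstructor; [|eauto]. apply lift_step.
  apply sstep_iff. right; eauto.
Qed.

Lemma starL_single : forall r p x g, star (lift r) (dirac x) g -> star (lift r) [(p, x)] (scale p g).
Proof. intros. rewrite <- scale_dirac. apply starL_scale; auto. Qed.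

Lemma ElemS : forall t u n, pari t u -> basic sstep u n ->
  exists g, star (lift sstep) (dirac t) g /\ Fw pari g n.
Proof.
  intros t u n P [E|S].
  - subst. exists (dirac t). split; [constructor| apply Fw_dirac; auto].
  - apply sstep_iff in S. destruct S as [[a1 [b1 [O E]]]|[u' [W E]]]; subst.
    + destruct (os_pari _ _ _ O _ P) as [a [b [Ot [Pa Pb]]]].
      destruct (split_par _ _ Pa) as [La [Sa Qa]].
      destruct (split_par _ _ Pb) as [Lb [Sb Qb]].
      exists [((1/2)%R, La); ((1/2)%R, Lb)]. split.
      * econstructor. apply lift_step. apply sstep_iff. left. exists a, b; split; eauto.
        change [((1/2)%R, a); ((1/2)%R, b)] with ([((1/2)%R, a)] ++ [((1/2)%R, b)]).
        change [((1/2)%R, La); ((1/2)%R, Lb)] with ([((1/2)%R, La)] ++ [((1/2)%R, Lb)]).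
        apply starL_app.
        -- rewrite <- (scale_dirac _ La). apply starL_single. apply ws_star_lift; auto.
        -- rewrite <- (scale_dirac _ Lb). apply starL_single. apply ws_star_lift; auto.
      * repeat constructor; auto.
    + destruct (sw1 _ _ _ P W) as [t' [t'' [W1 [S1 P1]]]].
      exists (dirac t''). split.
      * econstructor. apply lift_step. apply sstep_iff. right. exists t'; split; eauto.
        apply ws_star_lift; auto.
      * apply Fw_dirac; auto.
Qed.

Lemma ElemStep : forall t u n, pari t u -> basic step u n ->
  exists g, star (lift sstep) (dirac t) g /\ Fw (star pari) g n.
Proof.
  intros t u n P B.
  assert (Hw : forall g, Fw pari g n -> Fw (star pari) g n).
  { intros g Hg. eapply Fw_mono; [|exact Hg]. intros; apply star_one; auto. }
  destruct B as [E|[S|S]].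
  - destruct (ElemS t u n P (or_introl E)) as [g [G1 G2]]; eauto.
  - apply step_beta_iff in S. destruct S as [u' [Hb E]]; subst.
    destruct (bs_class _ _ Hb) as [W|Pi].
    + destruct (ElemS t u (dirac u') P) as [g [G1 G2]]; eauto.
      right. apply sstep_iff. right; eauto.
    + exists (dirac t). split; [constructor|]. apply Fw_dirac.
      econstructor; eauto. apply star_one; auto.
  - destruct (ElemS t u n P) as [g [G1 G2]]; eauto. right. unfold sstep; auto.
Qed.

Lemma SimS : forall f c c1, Fw pari f c -> lift sstep c c1 ->
  exists f1, star (lift sstep) f f1 /\ Fw pari f1 c1.
Proof. intros. eapply comb_step; eauto. apply ElemS. Qed.

Lemma SimS_star : forall c c', star (lift sstep) c c' -> forall f, Fw pari f c ->
  exists f', star (lift sstep) f f' /\ Fw pari f' c'.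
Proof.
  induction 1; intros f F.
  - exists f; split; auto. constructor.
  - destruct (SimS _ _ _ F H) as [f1 [S1 F1]].
    destruct (IHstar _ F1) as [f' [S2 F2]].
    exists f'; split; auto. eapply star_trans; eauto.
Qed.

Inductive Cn : mdist -> mdist -> Prop :=
| cn_refl s : Cn s s
| cn_step f c s : Fw pari f c -> Cn c s -> Cn f s.

Lemma Cn_trans : forall a b c, Cn a b -> Cn b c -> Cn a c.
Proof. induction 1; intros; auto. econstructor; eauto. Qed.

Lemma Cn_cons : forall p t u f s, star pari t u -> Cn f s -> Cn ((p, t) :: f) ((p, u) :: s).
Proof.
  intros p t u f s St C. apply Cn_trans with ((p, u) :: f).
  - induction St; [constructor|]. econstructor; [|eauto]. constructor; [split; auto|].
    apply Fw_refl. apply pari_refl.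
  - induction C; [constructor|]. econstructor; [|eauto]. constructor; [split; auto; apply pari_refl|]. auto.
Qed.

Lemma chainify : forall f s, Fw (star pari) f s -> Cn f s.
Proof.
  intros f s F. induction F as [|[p t] [q u] f s [E S] F IH]; [constructor|].
  simpl in *; subst. apply Cn_cons; auto.
Qed.

Lemma ML : forall f s s', Fw (star pari) f s -> Rsteps s s' ->
  exists f', star (lift sstep) f f' /\ Fw (star pari) f' s'.
Proof.
  intros f s s' F HR. apply chainify in F. induction F.
  - eapply comb_step with (R := pari); eauto. apply Fw_refl, pari_refl.
    apply ElemStep.
  - destruct (IHF HR) as [c' [S1 F1]].
    destruct (SimS_star _ _ S1 _ H) as [f' [S2 F2]].
    exists f'; split; auto. eapply Fw_comp; eauto. intros; econstructor; eauto.
Qed.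

Definition InvR (a b : term) : Prop := star pari a b /\ (normal b -> a = b).

Lemma stepE_step : forall M m, stepE M m -> step M m.
Proof.
  intros M m H. destruct H as [M m _ S| M M' _ U].
  - apply sstep_iff in S. destruct S as [[a [b [O E]]]|[t' [W E]]].
    + right. apply oplus_os; eauto.
    + left. apply step_beta_iff. exists t'; split; auto. apply ws_bs; auto.
  - left. apply step_beta_iff. exists M'; split; auto. apply stepU_bs; auto.
Qed.

Lemma sstep_stepE : forall M m, sstep M m -> stepE M m.
Proof. intros M m S. apply E_s; auto. intros H. apply (H m S). Qed.

Lemma Norm : forall f s, Fw (star pari) f s ->
  exists f', star RstepsE f f' /\ Fw InvR f' s.
Proof.
  intros f s F. apply (comb_nostep _ _ stepE f s F).
  intros t u St. destruct (excluded_middle_informative (normal u)) as [Hn|Hn].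
  - destruct (UN_final _ _ St Hn) as [Hs SU].
    exists u. split.
    + clear St Hs. induction SU; [constructor|]. destruct H as [Hs HU].
      econstructor; [|eauto]. apply lift_step. apply E_u; auto. apply snormal_sn; auto.
    + split; [constructor| auto].
  - exists t. split; [constructor|]. split; auto. intros; contradiction.
Qed.

Lemma Next : forall f s s', Fw InvR f s -> Rsteps s s' ->
  exists f', star RstepsE f f' /\ Fw InvR f' s'.
Proof.
  intros f s s' F HR.
  destruct (ML f s s') as [f1 [S1 F1]]; auto.
  { eapply Fw_mono; [|exact F]. intros x y [H _]; auto. }
  destruct (Norm _ _ F1) as [f2 [S2 F2]].
  exists f2; split; auto. eapply star_trans; [|exact S2].
  eapply starL_mono; [|exact S1]. apply sstep_stepE.
Qed.

Lemma weight_app : forall a b N, weight_of (a ++ b) N = weight_of a N + weight_of b N.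
Proof.
  induction a as [|[p M] a IH]; intros b N; simpl; [lra|].
  destruct (term_eq_dec M N); rewrite IH; lra.
Qed.

Lemma weight_perm : forall a b N, Permutation a b -> weight_of a N = weight_of b N.
Proof.
  induction 1; simpl; auto.
  - destruct (term_eq_dec (snd x) N); rewrite IHPermutation; auto.
  - destruct (term_eq_dec (snd x) N), (term_eq_dec (snd y) N); lra.
  - congruence.
Qed.

Lemma weight_scale : forall p a N, weight_of (scale p a) N = p * weight_of a N.
Proof.
  induction a as [|[q M] a IH]; intros N; simpl; [lra|].
  destruct (term_eq_dec M N); rewrite IH; lra.
Qed.

Definition nonnegw (m : mdist) : Prop := Forall (fun pM => 0 <= fst pM) m.

Lemma weight_nonneg : forall a N, nonnegw a -> 0 <= weight_of a N.
Proof.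
  induction 1; simpl; [lra|]. destruct (term_eq_dec (snd x) N); lra.
Qed.

Lemma stepE_nonneg : forall M m, stepE M m -> nonnegw m.
Proof.
  intros M m H. destruct H as [M m _ S| M M' _ U].
  - apply sstep_iff in S. destruct S as [[a [b [O E]]]|[t' [W E]]]; subst;
    repeat constructor; simpl; lra.
  - repeat constructor; simpl; lra.
Qed.

Lemma nonneg_app : forall a b, nonnegw a -> nonnegw b -> nonnegw (a ++ b).
Proof. intros; apply Forall_app; auto. Qed.

Lemma nonneg_scale : forall p a, 0 <= p -> nonnegw a -> nonnegw (scale p a).
Proof. intros p a Hp H; induction H; simpl; constructor; auto. simpl. apply Rmult_le_pos; auto. Qed.

Lemma nonneg_perm : forall a b, Permutation a b -> nonnegw a -> nonnegw b.
Proof. intros. eapply Permutation_Forall; eauto. Qed.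

Lemma liftE_mono : forall a b, lift stepE a b -> nonnegw a ->
  nonnegw b /\ forall N, normal N -> weight_of a N <= weight_of b N.
Proof.
  intros a b H Ha. apply lift_LC in H. destruct H as [ms [Hb HP]].
  assert (nonnegw (comb a ms) /\ forall N, normal N -> weight_of a N <= weight_of (comb a ms) N) as [H1 H2].
  { clear HP. induction Hb as [|[p M] mi a ms HB Hr IH]; [split; [constructor| intros; simpl; lra]|].
    inversion Ha as [|x l Hp Ha']; subst. simpl in Hp.
    destruct (IH Ha') as [I1 I2]. rewrite comb_cons. simpl fst. split.
    - apply nonneg_app; auto. apply nonneg_scale; auto.
      destruct HB as [E|E]; [subst; repeat constructor; simpl; lra| eapply stepE_nonneg; eauto].
    - intros N HN. rewrite weight_app, weight_scale. simpl snd.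
      specialize (I2 N HN). simpl.
      destruct HB as [E|E].
      + subst. simpl. destruct (term_eq_dec M N); lra.
      + destruct (term_eq_dec M N).
        * subst. exfalso. apply (HN mi). apply stepE_step; auto.
        * assert (0 <= p * weight_of mi N) by (apply Rmult_le_pos; auto; apply weight_nonneg; eapply stepE_nonneg; eauto).
          lra. }
  split.
  - eapply nonneg_perm; [apply Permutation_sym; eauto| auto].
  - intros N HN. rewrite (weight_perm _ _ N HP). auto.
Qed.

Lemma obs_mono : forall a b, lift stepE a b -> nonnegw a ->
  nonnegw b /\ forall N, obs_Nnf a N <= obs_Nnf b N.
Proof.
  intros a b H Ha. destruct (liftE_mono a b H Ha) as [H1 H2]. split; auto.
  intros N. unfold obs_Nnf. destruct (excluded_middle_informative (normal N)); auto. lra.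
Qed.

Lemma InvR_obs : forall f s, Fw InvR f s -> forall N, obs_Nnf f N = obs_Nnf s N.
Proof.
  intros f s F N. unfold obs_Nnf. destruct (excluded_middle_informative (normal N)) as [HN|]; auto.
  induction F as [|[p t] [q u] f s [E [S1 S2]] F IH]; simpl in *; auto.
  subst. rewrite IH.
  destruct (term_eq_dec u N).
  - subst. rewrite (S2 HN). destruct (term_eq_dec N N); [auto| congruence].
  - destruct (term_eq_dec t N); auto. subst.
    exfalso. apply n. apply (pari_star_bnormal _ _ S1). apply normal_bnormal; auto.
Qed.


Open Scope R_scope.

Fixpoint nsteps (Rl : mdist -> mdist -> Prop) (j : nat) (a b : mdist) : Prop :=
  match j with
  | O => a = b
  | S j' => exists c, Rl a c /\ nsteps Rl j' c b
  end.

Lemma star_nsteps : forall Rl a b, star Rl a b -> exists j, nsteps Rl j a b.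
Proof.
  induction 1; [exists O; reflexivity|]. destruct IHstar as [j Hj]. exists (S j); simpl; eauto.
Qed.

Lemma nsteps_obs : forall j a b, nsteps RstepsE j a b -> nonnegw a ->
  forall N, obs_Nnf a N <= obs_Nnf b N.
Proof.
  induction j; simpl; intros a b H Ha N.
  - subst; lra.
  - destruct H as [c [H1 H2]]. destruct (obs_mono _ _ H1 Ha) as [Hc Ho].
    specialize (IHj _ _ H2 Hc N). specialize (Ho N). lra.
Qed.

Section Main.
Variable s : nat -> mdist.
Hypothesis HS : forall n, Rsteps (s n) (s (S n)).

Definition Good (x : mdist * nat * nat) : Prop :=
  nonnegw (fst (fst x)) /\
  exists f, nsteps RstepsE (snd x) (fst (fst x)) f /\ Fw InvR f (s (snd (fst x))).

Definition TR (x y : mdist * nat * nat) : Prop :=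
  RstepsE (fst (fst x)) (fst (fst y)) /\ Good y /\
  ((snd x = S (snd y) /\ snd (fst y) = snd (fst x)) \/
   (snd x = O /\ snd (fst y) = S (snd (fst x)))).

Lemma trans_ex : forall x, Good x -> exists y, TR x y.
Proof.
  intros [[e k] j] [Hn [f [Hj HI]]]; simpl in *.
  destruct j as [|j].
  - simpl in Hj; subst f.
    destruct (Next e (s k) (s (S k)) HI (HS k)) as [f' [Sf Ff]].
    destruct (star_nsteps _ _ _ Sf) as [j' Hj'].
    exists (e, S k, j'). unfold TR, Good; simpl. repeat split; auto.
    + apply lift_self.
    + exists f'; split; auto.
  - destruct Hj as [c [Hc Hcf]].
    exists (c, k, j). unfold TR, Good; simpl. repeat split; auto.
    + destruct (obs_mono _ _ Hc Hn); auto.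
    + exists f; split; auto.
Qed.

Definition St := {x : mdist * nat * nat | Good x}.

Lemma trans_ex' : forall x : St, exists y : St, TR (proj1_sig x) (proj1_sig y).
Proof.
  intros [x Hx]. destruct (trans_ex x Hx) as [y Hy].
  assert (Good y) by (destruct Hy as [_ [G _]]; auto).
  exists (exist _ y H); simpl; auto.
Qed.

Definition next (x : St) : St := proj1_sig (constructive_indefinite_description _ (trans_ex' x)).

Lemma next_spec : forall x, TR (proj1_sig x) (proj1_sig (next x)).
Proof. intros x. unfold next. destruct (constructive_indefinite_description _ _); auto. Qed.

Variable x0 : St.

Fixpoint seqS (n : nat) : St :=
  match n with O => x0 | S n' => next (seqS n') end.

Definition E n := fst (fst (proj1_sig (seqS n))).
Definition K n := snd (fst (proj1_sig (seqS n))).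
Definition J n := snd (proj1_sig (seqS n)).

Lemma E_step : forall n, RstepsE (E n) (E (S n)).
Proof. intros n. unfold E. simpl. destruct (next_spec (seqS n)) as [H _]; auto. Qed.

Lemma J_run : forall i n, J n = i -> J (n + i)%nat = O /\ K (n + i)%nat = K n.
Proof.
  induction i; intros n H.
  - rewrite Nat.add_0_r. auto.
  - destruct (next_spec (seqS n)) as [_ [_ [[H1 H2]|[H1 H2]]]].
    + fold (J n) in H1. rewrite H in H1. injection H1; intros H3.
      replace (n + S i)%nat with (S n + i)%nat by lia.
      destruct (IHi (S n)) as [A B]; [unfold J; simpl; auto|]. split; auto.
      rewrite B. unfold K; simpl. auto.
    + fold (J n) in H1. rewrite H in H1. discriminate.
Qed.

Lemma K_reach : forall k, K O = O -> J O = O -> exists n, K n = k /\ J n = O.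
Proof.
  intros k HK HJ. induction k.
  - exists O; auto.
  - destruct IHk as [n [Hk Hj]].
    destruct (next_spec (seqS n)) as [_ [_ [[H1 H2]|[H1 H2]]]].
    + fold (J n) in H1. rewrite Hj in H1. discriminate.
    + destruct (J_run (J (S n)) (S n) eq_refl) as [A B].
      exists (S n + J (S n))%nat. split; auto. rewrite B. unfold K; simpl.
      rewrite H2. fold (K n). rewrite Hk. auto.
Qed.

Lemma E_obs_le : forall n N, obs_Nnf (E n) N <= obs_Nnf (s (K n)) N.
Proof.
  intros n N. destruct (proj2_sig (seqS n)) as [Hn [f [Hj HI]]].
  unfold E, K. rewrite <- (InvR_obs _ _ HI N). eapply nsteps_obs; eauto.
Qed.

Lemma E_obs_eq : forall n N, J n = O -> obs_Nnf (E n) N = obs_Nnf (s (K n)) N.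
Proof.
  intros n N H. destruct (proj2_sig (seqS n)) as [Hn [f [Hj HI]]].
  unfold J in H. rewrite H in Hj. simpl in Hj. subst f.
  unfold E, K. apply InvR_obs; auto.
Qed.

End Main.

Lemma Rsteps_refl : forall a, Rsteps a a.
Proof. intros; apply lift_self. Qed.

Theorem mainTheorem8 :
  forall (m : mdist) (r : term -> R),
    is_mdist m -> subdist r ->
    obs_lim Rsteps m r -> obs_lim RstepsE m r.
Proof.
  intros m r Hm _ [s [[Hs0 Hmax] Hlub]].
  assert (HS : forall n, Rsteps (s n) (s (S n))).
  { destruct Hmax as [H|[k [_ [Hk _]]]]; auto. exfalso. apply (Hk (s k)). apply Rsteps_refl. }
  assert (G0 : Good s (m, O, O)).
  { split; simpl.
    - destruct Hm as [Hm _]. eapply Forall_impl; [|exact Hm]. intros [p M]; simpl; lra.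
    - exists m. split; [reflexivity|]. rewrite Hs0. apply Fw_refl. intros x; split; [constructor| auto]. }
  set (x0 := exist _ (m, O, O) G0 : St s).
  exists (E s HS x0). split.
  - split; [reflexivity|]. left. apply E_step.
  - intros N. split.
    + intros x [n Hx]; subst. apply Rle_trans with (obs_Nnf (s (K s HS x0 n)) N).
      * apply E_obs_le.
      * apply (proj1 (Hlub N)). eauto.
    + intros b Hb. apply (proj2 (Hlub N)). intros x [k Hx]; subst.
      destruct (K_reach s HS x0 k eq_refl eq_refl) as [n [Hk Hj]].
      rewrite <- Hk. rewrite <- (E_obs_eq s HS x0 n N Hj). apply Hb. eauto.
Qed.
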